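(* For every equivalence class $[i]\in I/\sim$, the subspace $V_{[i]}=\bigoplus_{i'\in[i]}\mathbb F v_{i'}$ is a $k$-submodule of $\mathbb V$.
   Context: Fix integers $n\ge 2$ and $1\le k\le n$ and an arbitrary field $\mathbb F$; $S_n$ denotes the symmetric group on $n$ letters. A $k$-module over a linear space $\mathbb W$ is an $\mathbb F$-vector space $\mathbb V$ (the dimensions of $\mathbb V$ and $\mathbb W$ are arbitrary, possibly infinite) together with, for every $\sigma\in S_n$, an $n$-linear map $\mathbb V^k\times\mathbb W^{n-k}\to\mathbb V$, $(x_1,\dots,x_k,y_{k+1},\dots,y_n)\mapsto[x_1,\dots,x_k,y_{k+1},\dots,y_n]_\sigma$ (interpreted as an $n$-ary bracket in which the $l$-th argument is placed in position $\sigma(l)$). A $k$-submodule of $\mathbb V$ is a linear subspace $U$ such that $[u,x_2,\dots,x_k,y_{k+1},\dots,y_n]_\sigma\in U$ for all $\sigma\in S_n$, $u\in U$, $x_l\in\mathbb V$, $y_l\in\mathbb W$. Fix a basis $\mathfrak B'=\{w_j\}_{j\in J}$ of $\mathbb W$. A basis $\mathfrak B=\{v_i\}_{i\in I}$ of $\mathbb V$ is multiplicative (with respect to $\mathfrak B'$) if for all $\sigma\in S_n$, $i_1,\dots,i_k\in I$, $j_{k+1},\dots,j_n\in J$, the element $[v_{i_1},\dots,v_{i_k},w_{j_{k+1}},\dots,w_{j_n}]_\sigma$ lies in $\mathbb F v_r$ for some $r\in I$. Throughout, $\mathbb V$ is a $k$-module over $\mathbb W$ with a multiplicative basis $\mathfrak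 B=\{v_i\}_{i\in I}$ with respect to $\mathfrak B'=\{w_j\}_{j\in J}$. Index machinery: let $\overline I=\{\overline i:i\in I\}$ and $\overline J=\{\overline j:j\in J\}$ be sets of new symbols disjoint from $I$ and $J$, with the convention $\overline{\overline x}=x$; for a tuple $X=(x_2,\dots,x_k)$ put $\overline X=(\overline x_2,\dots,\overline x_k)$, similarly for $Y$. For $\sigma\in S_n$, $i_1,\dots,i_k\in I$, $j_{k+1},\dots,j_n\in J$, let $a_\sigma(i_1,\dots,i_k,j_{k+1},\dots,j_n)=\emptyset$ if $[v_{i_1},\dots,v_{i_k},w_{j_{k+1}},\dots,w_{j_n}]_\sigma=0$ and $=\{r\}$ if this bracket is a nonzero element of $\mathbb F v_r$. For $i,i_2,\dots,i_k\in I$, $j_{k+1},\dots,j_n\in J$ let $b_\sigma(i,\overline i_2,\dots,\overline i_k,\overline j_{k+1},\dots,\overline j_n)=\{i'\in I: a_\sigma(i',i_2,\dots,i_k,j_{k+1},\dots,j_n)=\{i\}\}$. For $i\in I$, $X=(x_2,\dots,x_k)\in(I\,\dot\cup\,\overline I)^{k-1}$, $Y=(y_{k+1},\dots,y_n)\in(J\,\dot\cup\,\overline J)^{n-k}$ define $\mu(i,X,Y)\subseteq I$ by: $\mu(i,X,Y)=\bigcup_{\sigma\in S_n}a_\sigma(i,X,Y)$ if all $x_l\in I$ and all $y_l\in J$; $\mu(i,X,Y)=\bigcup_{\sigma\in S_n}b_\sigma(i,X,Y)$ if all $x_l\in\overline I$ and all $y_l\in\overline J$; and $\mu(i,X,Y)=\emptyset$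 otherwise. For $\mathfrak A\subseteq I$ set $\phi(\mathfrak A,X,Y)=\bigcup_{i\in\mathfrak A}\mu(i,X,Y)$. Connections: for distinct $i,i'\in I$, a connection from $i$ to $i'$ is a finite sequence $(X_1,Y_1,\dots,X_t,Y_t)$, $t\ge1$, with $X_m\in(I\,\dot\cup\,\overline I)^{k-1}$ and $Y_m\in(J\,\dot\cup\,\overline J)^{n-k}$, such that, setting $\mathfrak A_0=\{i\}$ and $\mathfrak A_m=\phi(\mathfrak A_{m-1},X_m,Y_m)$, one has $\mathfrak A_m\neq\emptyset$ for $1\le m\le t-1$ and $i'\in\mathfrak A_t$. We say $i$ is connected to $i'$ if such a connection exists; by convention every $i\in I$ is connected to itself. This relation, written $i\sim i'$, is an equivalence relation on $I$; $[i]$ denotes the class of $i$ and $I/\sim$ the set of classes. *)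

(* Defs.v *)
From HB Require Import structures.
From mathcomp Require Import all_boot all_order all_algebra all_fingroup.
Set Implicit Arguments. Unset Strict Implicit. Unset Printing Implicit Defensive.
Import GRing.Theory.
Local Open Scope ring_scope.

(* Convention: the paper's k (with 1 <= k <= n) is written k1.+1, i.e. k1 = k - 1.
   The V-arguments x_1..x_k are indexed by 'I_k1.+1 (index 0 is x_1),
   the W-arguments y_{k+1}..y_n are indexed by 'I_(n - k1.+1). *)

Section KModules.
Variables (F : fieldType) (V W : lmodType F) (n k1 : nat).

Definition bracket := 'S_n -> ('I_k1.+1 -> V) -> ('I_(n - k1.+1) -> W) -> V.

Definition upd {T : Type} {m : nat} (f : 'I_m -> T) (l : 'I_m) (u : T) : 'I_m -> T :=
  fun j => if j == l then u else f j.

Definition multilinear (br : bracket) : Prop :=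
  forall s x y,
    (forall (l : 'I_k1.+1) (a : F) (u u' : V),
        br s (upd x l (a *: u + u')) y = a *: br s (upd x l u) y + br s (upd x l u') y) /\
    (forall (l : 'I_(n - k1.+1)) (a : F) (u u' : W),
        br s x (upd y l (a *: u + u')) = a *: br s x (upd y l u) + br s x (upd y l u')).

Definition in_span {U : lmodType F} {I : Type} (P : I -> Prop) (v : I -> U) (u : U) : Prop :=
  exists (m : nat) (f : 'I_m -> I) (c : 'I_m -> F),
    (forall t, P (f t)) /\ u = \sum_(t < m) c t *: v (f t).

Definition lin_indep {U : lmodType F} {I : Type} (v : I -> U) : Prop :=
  forall (m : nat) (f : 'I_m -> I) (c : 'I_m -> F),
    injective f -> \sum_(t < m) c t *: v (f t) = 0 -> forall t, c t = 0.

Definition is_basis {U : lmodType F} {I : Type} (v : I -> U) : Prop :=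
  lin_indep v /\ forall u, in_span (fun _ => True) v u.

Variables (I J : Type) (v : I -> V) (w : J -> W).

Definition multiplicative (br : bracket) : Prop :=
  forall s (ii : 'I_k1.+1 -> I) (jj : 'I_(n - k1.+1) -> J),
    exists (r : I) (c : F), br s (fun l => v (ii l)) (fun l => w (jj l)) = c *: v r.

Definition consI (i : I) (X : 'I_k1 -> I) : 'I_k1.+1 -> I :=
  fun l => match unlift ord0 l with None => i | Some m => X m end.

Definition a_rel (br : bracket) s (ii : 'I_k1.+1 -> I) (jj : 'I_(n - k1.+1) -> J) (r : I) : Prop :=
  br s (fun l => v (ii l)) (fun l => w (jj l)) <> 0 /\
  exists c : F, br s (fun l => v (ii l)) (fun l => w (jj l)) = c *: v r.

(* i' \in b_sigma(i, Xbar, Ybar)  iff  a_sigma(i', X, Y) = {i} *)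
Definition b_rel (br : bracket) s (i : I) (X : 'I_k1 -> I) (Y : 'I_(n - k1.+1) -> J) (i' : I) : Prop :=
  a_rel br s (consI i' X) Y i.

(* The symbols of Ibar (resp. Jbar) are encoded as inr. *)
Definition mu (br : bracket) (i : I) (X : 'I_k1 -> I + I) (Y : 'I_(n - k1.+1) -> J + J) (r : I) : Prop :=
  exists s : 'S_n,
    (exists X0 Y0, (forall l, X l = inl (X0 l)) /\ (forall l, Y l = inl (Y0 l)) /\
                   a_rel br s (consI i X0) Y0 r) \/
    (exists X0 Y0, (forall l, X l = inr (X0 l)) /\ (forall l, Y l = inr (Y0 l)) /\
                   b_rel br s i X0 Y0 r).

Definition phi (br : bracket) (A : I -> Prop) X Y (r : I) : Prop :=
  exists i, A i /\ mu br i X Y r.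

Definition iter_phi (br : bracket) (A : I -> Prop)
  (cs : seq (('I_k1 -> I + I) * ('I_(n - k1.+1) -> J + J))) : I -> Prop :=
  foldl (fun B p => phi br B p.1 p.2) A cs.

Definition is_connection (br : bracket) (i i' : I)
  (cs : seq (('I_k1 -> I + I) * ('I_(n - k1.+1) -> J + J))) : Prop :=
  i <> i' /\ (0 < size cs)%N /\
  (forall m : nat, (0 < m < size cs)%N -> exists r, iter_phi br (fun j => j = i) (take m cs) r) /\
  iter_phi br (fun j => j = i) cs i'.

Definition connected (br : bracket) (i i' : I) : Prop :=
  i = i' \/ exists cs, is_connection br i i' cs.

Definition V_class (br : bracket) (i : I) : V -> Prop :=
  in_span (fun i' => connected br i i') v.

End KModules.

Definition is_ksubmodule (F : fieldType) (V W : lmodType F) (n k1 : nat)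
  (br : bracket V W n k1) (U : V -> Prop) : Prop :=
  [/\ U 0, (forall u u', U u -> U u' -> U (u + u')),
      (forall (a : F) u, U u -> U (a *: u)) &
      forall s (x : 'I_k1.+1 -> V) (y : 'I_(n - k1.+1) -> W),
        U (x ord0) -> U (br s x y)].

(* Main.v *)
Require Import Defs.
From HB Require Import structures.
From mathcomp Require Import all_boot all_order all_algebra all_fingroup.
From Stdlib Require Import FunctionalExtensionality Classical IndefiniteDescription.
Set Implicit Arguments. Unset Strict Implicit. Unset Printing Implicit Defensive.
Module Helpers.
Import GRing.Theory.
Local Open Scope ring_scope.

Lemma span_map (F : fieldType) (M V : lmodType F) (K : Type) (e : K -> M)
  (P : K -> Prop) (U : V -> Prop) (g : M -> V) :
  U 0 -> (forall a b, U a -> U b -> U (a + b)) -> (forall c a, U a -> U (c *: a)) ->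
  (forall a u u', g (a *: u + u') = a *: g u + g u') ->
  (forall j, P j -> U (g (e j))) -> forall u, in_span P e u -> U (g u).
Proof.
move=> U0 UD UZ lin he.
have g0 : g 0 = 0.
  have h := lin 1 0 0; rewrite !scale1r addr0 in h.
  have: g 0 - g 0 = g 0 + g 0 - g 0 by rewrite -h.
  by rewrite subrr addrK.
move=> u [m [f [c [Pf ->]]]].
elim: m f c Pf => [|m IH] f c Pf; first by rewrite big_ord0 g0.
rewrite big_ord_recr /= addrC lin.
apply: UD; first by apply: UZ; apply: he.
exact: (IH (fun t => f (widen_ord (leqnSn m) t)) (fun t => c (widen_ord (leqnSn m) t)) (fun t => Pf _)).
Qed.

Section Closure.
Variables (F : fieldType) (V : lmodType F) (I : Type) (v : I -> V) (P : I -> Prop).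

Lemma span0 (i : I) : in_span P v 0.
Proof.
exists 0%N, (fun _ => i), (fun _ => 0); split; first by case.
by rewrite big_ord0.
Qed.

Lemma spanD a b : in_span P v a -> in_span P v b -> in_span P v (a + b).
Proof.
move=> [m1 [f1 [c1 [P1 ->]]]] [m2 [f2 [c2 [P2 ->]]]].
exists (m1 + m2)%N,
  (fun t => match split t with inl x => f1 x | inr y => f2 y end),
  (fun t => match split t with inl x => c1 x | inr y => c2 y end).
split; first by move=> t; case: (split t).
rewrite big_split_ord /=; congr (_ + _); apply: eq_bigr => t _.
  by rewrite (unsplitK (inl t)).
by rewrite (unsplitK (inr t)).
Qed.

Lemma spanZ c a : in_span P v a -> in_span P v (c *: a).
Proof.
move=> [m [f [d [Pf ->]]]]; exists m, f, (fun t => c * d t); split => //.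
by rewrite scaler_sumr; apply: eq_bigr => t _; rewrite scalerA.
Qed.

Lemma span1 c r : P r -> in_span P v (c *: v r).
Proof.
move=> Pr; exists 1%N, (fun _ => r), (fun _ => c); split => //.
by rewrite big_ord1.
Qed.
End Closure.

Lemma conn_step (F : fieldType) (V W : lmodType F) (n k1 : nat)
  (br : bracket V W n k1) (I J : Type) (v : I -> V) (w : J -> W) i i0 X Y r :
  connected v w br i i0 -> mu v w br i0 X Y r -> connected v w br i r.
Proof.
move=> hc hmu.
case: (classic (i = r)) => [->|ne]; first by left.
right; case: hc => [e|[cs [_ [sz [mid last]]]]].
  subst i0; exists [:: (X, Y)]; split => //; split => //; split; first by case=> [|[]].
  by exists i.
exists (rcons cs (X, Y)); split => //; rewrite size_rcons; split => //; split.
  move=> m /andP [m0 ms]; rewrite -cats1 take_cat.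
  case: ltnP => hm; first by apply: mid; rewrite m0 hm.
  have -> : m = size cs by apply/eqP; rewrite eqn_leq hm -ltnS ms.
  by rewrite subnn take0 cats0; exists i0.
by rewrite /iter_phi -cats1 foldl_cat /=; exists i0.
Qed.

End Helpers.
Import Helpers.
Local Open Scope ring_scope.

Theorem mainTheorem5 (F : fieldType) (V W : lmodType F) (n k1 : nat)
  (hn : (2 <= n)%N) (hk : (k1.+1 <= n)%N)
  (br : bracket V W n k1) (hbr : multilinear br)
  (I J : Type) (v : I -> V) (w : J -> W)
  (hv : is_basis v) (hw : is_basis w) (hmul : multiplicative v w br) :
  forall i : I, is_ksubmodule br (V_class v w br i).
Proof.
move=> i.
set U := V_class v w br i.
have U0 : U 0 by exact: span0.
have UD : forall a b, U a -> U b -> U (a + b) by move=> a b; exact: spanD.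
have UZ : forall c a, U a -> U (c *: a) by move=> c a; exact: spanZ.
split => //.
move=> s.
have base : forall ii jj, connected v w br i (ii ord0) ->
    U (br s (fun l => v (ii l)) (fun l => w (jj l))).
  move=> ii jj hc; have [r [c e]] := hmul s ii jj; rewrite e.
  case: (classic (c *: v r = 0)) => [->|nz]; first exact: U0.
  apply: span1.
  apply: (conn_step (X := fun l => inl (ii (lift ord0 l))) (Y := fun l => inl (jj l)) hc).
  exists s; left; exists (fun l => ii (lift ord0 l)), jj; split => //; split => //.
  have ec : (fun l => v (consI (ii ord0) (fun l => ii (lift ord0 l)) l)) = (fun l => v (ii l)).
    by apply: functional_extensionality => l; rewrite /consI; case: unliftP => [j ->|->].
  rewrite /a_rel ec e; split => //; by exists c.
have stepY : forall ii, connected v w br i (ii ord0) ->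
   forall m, (m <= n - k1.+1)%N -> forall y,
   (forall l : 'I_(n - k1.+1), (m <= l)%N -> exists j, y l = w j) ->
   U (br s (fun l => v (ii l)) y).
  move=> ii hc; elim=> [|m IH] hm y hy.
    pose jj := fun l => proj1_sig (constructive_indefinite_description _ (hy l (leq0n _))).
    have -> : y = (fun l => w (jj l)).
      apply: functional_extensionality => l.
      exact: (proj2_sig (constructive_indefinite_description _ (hy l (leq0n _)))).
    exact: base.
  pose l0 : 'I_(n - k1.+1) := Ordinal hm.
  have -> : y = upd y l0 (y l0).
    by apply: functional_extensionality => l; rewrite /upd; case: eqP => // ->.
  apply: (span_map (e := w) (P := fun _ => True)
            (g := fun u => br s (fun l => v (ii l)) (upd y l0 u))) => //.
  - move=> a u u'; exact: ((hbr s _ y).2 l0).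
  - move=> j _; apply: IH; first exact: ltnW.
    move=> l hl; rewrite /upd; case: eqP => [_|ne]; first by exists j.
    apply: hy; rewrite ltn_neqAle hl andbT; apply/eqP => em; apply: ne.
    by apply: val_inj; rewrite /= em.
  - exact: (hw.2 (y l0)).
have stepX : forall m, (m <= k1)%N -> forall i0 x, x ord0 = v i0 ->
   connected v w br i i0 ->
   (forall l : 'I_k1.+1, (0 < l)%N -> (m.+1 <= l)%N -> exists j, x l = v j) ->
   forall y, U (br s x y).
  elim=> [|m IH] hm i0 x e0 hc hx y.
    have h : forall l, exists j, x l = v j.
      move=> l; case: (posnP l) => [l0|lp]; last exact: hx.
      by exists i0; rewrite -e0; congr x; apply: val_inj.
    pose ii := fun l => if l == ord0 then i0
                        else proj1_sig (constructive_indefinite_description _ (h l)).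
    have -> : x = (fun l => v (ii l)).
      apply: functional_extensionality => l; rewrite /ii; case: eqP => [->//|_].
      exact: (proj2_sig (constructive_indefinite_description _ (h l))).
    have hci : connected v w br i (ii ord0) by rewrite /ii eqxx.
    apply: (stepY ii hci (n - k1.+1)%N (leqnn _) y).
    move=> l hl; have := ltn_ord l; by rewrite ltnNge hl.
  have hm' : (m.+1 < k1.+1)%N by [].
  pose l0 : 'I_k1.+1 := Ordinal hm'.
  have -> : x = upd x l0 (x l0).
    by apply: functional_extensionality => l; rewrite /upd; case: eqP => // ->.
  apply: (span_map (e := v) (P := fun _ => True)
            (g := fun u => br s (upd x l0 u) y)) => //.
  - move=> a u u'; exact: ((hbr s _ y).1 l0).
  - move=> j _; apply: (IH (ltnW hm) i0 (upd x l0 (v j))) => //.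
    move=> l lp hl; rewrite /upd; case: eqP => [_|ne]; first by exists j.
    apply: hx => //; rewrite ltn_neqAle hl andbT; apply/eqP => em; apply: ne.
    by apply: val_inj; rewrite /= em.
  - exact: (hv.2 (x l0)).
move=> x y hx0.
have -> : x = upd x ord0 (x ord0).
  by apply: functional_extensionality => l; rewrite /upd; case: eqP => // ->.
apply: (span_map (e := v) (P := connected v w br i)
          (g := fun u => br s (upd x ord0 u) y)) => //.
- move=> a u u'; exact: ((hbr s _ y).1 ord0).
- move=> j hj; apply: (stepX k1 (leqnn _) j) => //.
  move=> l _ hl; have := ltn_ord l; by rewrite ltnNge hl.
Qed.
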